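(* Let $f(x)=\frac{x}{1+rx+sx^2}$. The $(n,k)$-th entry of the inverse of the Riordan array $(f'(x),f(x))$ (an element of the derivative subgroup) is $$t_{n,k}=\sum_{j=0}^{n+1}\binom{n+1}{j}\binom{j}{n-k-j}s^{\,n-k-j}r^{\,2j+k-n}.$$
   Context: A Riordan array $(g(x),f(x))$ with $g(0)\ne0$, $f(0)=0$, $f'(0)\ne0$ is the lower-triangular matrix with $(n,k)$ entry $[x^n]g(x)f(x)^k$; products correspond to $(g,f)(u,v)=(g\,u(f),v(f))$ and inverses to $(g,f)^{-1}=(1/g(\bar f),\bar f)$ with $\bar f$ the compositional inverse. The derivative subgroup consists of arrays $(f'(x),f(x))$. $\binom{j}{m}=0$ unless $0\le m\le j$. *)

(* Defs.v *)
From HB Require Import structures.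
From mathcomp Require Import all_boot all_order all_algebra.
Set Implicit Arguments. Unset Strict Implicit. Unset Printing Implicit Defensive.
Import Order.TTheory GRing.Theory Num.Theory.
Local Open Scope ring_scope.

Section Series.
Variable R : comNzRingType.

Definition series := nat -> R.

Definition sone : series := fun n => (n == 0%N)%:R.

Definition smul (a b : series) : series :=
  fun n => \sum_(i < n.+1) a i * b (n - i)%N.

Definition spow (a : series) (k : nat) : series := iter k (smul a) sone.

Definition sderiv (a : series) : series := fun n => a n.+1 *+ n.+1.

(* 1/(1+q) = sum_{i>=0} (-q)^i, for q with zero constant term
   (the coefficient of x^n only receives contributions from i <= n) *)
Definition sinv1 (q : series) : series :=
  fun n => \sum_(i < n.+1) spow (fun m => - q m) i n.

Definition qrs (r s : R) : series :=
  fun n => if n == 1%N then r else if n == 2%N then s else 0.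

(* f(x) = x / (1 + r x + s x^2) *)
Definition frs (r s : R) : series :=
  fun n => match n with 0 => 0 | n'.+1 => sinv1 (qrs r s) n' end.

Definition riordan (g f : series) (n k : nat) : R := smul g (spow f k) n.

Definition Mrs (r s : R) (n k : nat) : R :=
  riordan (sderiv (frs r s)) (frs r s) n k.

End Series.

Definition binz (j : nat) (m : int) : nat :=
  match m with Posz m' => 'C(j, m') | Negz _ => 0%N end.

(* the claimed entries t_{n,k}; exponents are truncated nat differences,
   which agree with the true exponents whenever the binomial factor is nonzero *)
Definition trs (R : comNzRingType) (r s : R) (n k : nat) : R :=
  \sum_(j < n.+2)
     ('C(n.+1, j) * binz j (n%:Z - k%:Z - j%:Z))%:R
       * s ^+ (n - k - j)%N * r ^+ (2 * j + k - n)%N.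

(* Main.v *)
Require Import Defs.
From HB Require Import structures.
From mathcomp Require Import all_boot all_order all_algebra ring zify.
Import GRing.Theory Num.Theory.
Local Open Scope ring_scope.

Definition PpG (R : comNzRingType) (r s : R) : {poly R} :=
  1 + 'X * (r%:P + s%:P * 'X).
Arguments PpG {R}.

Lemma keyU (e : nat) :
  let U := {poly {poly int}} in
  let P := PpG (('X : {poly int})%:P) ('X : U) in
  (P ^+ e.+1)`_e.+1 = (P^`() * P ^+ e)`_e.
Proof.
move=> U P.
have h : (P ^+ e.+1)`_e.+1 *+ e.+1 = (P^`() * P ^+ e)`_e *+ e.+1.
  by rewrite -coef_deriv deriv_exp -coefMn.
have nz : (e.+1%:R : U) != 0.
  rewrite -polyC_natr polyC_eq0.
  by rewrite -polyC_natr polyC_eq0 pnatr_eq0.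
apply/eqP; rewrite -subr_eq0; apply/eqP.
have : ((P ^+ e.+1)`_e.+1 - (P^`() * P ^+ e)`_e) * e.+1%:R = 0.
  by rewrite mulrBl !mulr_natr h subrr.
by move/eqP; rewrite mulf_eq0 (negbTE nz) orbF => /eqP.
Qed.

Lemma key (R : comNzRingType) (r s : R) (e : nat) :
  ((PpG r s) ^+ e.+1)`_e.+1 = ((PpG r s)^`() * (PpG r s) ^+ e)`_e.
Proof.
pose cf1 : commr_rmorph (intr : int -> R) r := fun x => mulrC _ _.
pose phi1 := horner_morph cf1.
pose cf2 : commr_rmorph phi1 s := fun x => mulrC _ _.
pose phi := horner_morph cf2.
have hP : map_poly phi (PpG (('X : {poly int})%:P) ('X : {poly {poly int}})) = PpG r s.
  rewrite /PpG rmorphD rmorph1 rmorphM rmorphD rmorphM /= !map_polyC !map_polyX.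
  congr (1 + 'X * ((_ : R)%:P + (_ : R)%:P * 'X)).
    by change (phi ('X%:P) = r); rewrite /phi horner_morphC; exact: horner_morphX.
  by change (phi 'X = s); rewrite /phi horner_morphX.
rewrite -hP -!rmorphXn deriv_map -rmorphM !coef_map /=.
by rewrite keyU.
Qed.

Lemma coefLpow (R : comNzRingType) (r s : R) j t :
  ((r%:P + s%:P * 'X) ^+ j)`_t = (s ^+ t * r ^+ (j - t)) *+ 'C(j, t).
Proof.
rewrite exprDn coef_sum.
have -> : \sum_(i < j.+1) ((r%:P ^+ (j - i) * (s%:P * 'X) ^+ i) *+ 'C(j, i))`_t
   = \sum_(i < j.+1) (if i == t :> nat then (s ^+ t * r ^+ (j - t)) *+ 'C(j, t) else 0).
  apply: eq_bigr => i _; rewrite exprMn -!rmorphXn mulrA -rmorphM coefMn coefCM coefXn.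
  by rewrite eq_sym; case: eqP => [->|_]; rewrite ?mulr1 ?mulr0 ?mul0rn // mulrC.
case: (ltnP t j.+1) => tj.
  rewrite (bigD1 (Ordinal tj)) //= eqxx big1 ?addr0 // => i ne.
  by case: eqP => // ei; case/eqP: ne; apply: val_inj.
by rewrite big1 ?bin_small // => i _; case: eqP => // ei; move: (ltn_ord i); rewrite ei ltnNge tj.
Qed.


Lemma binzE n k j : (k <= n)%N ->
  binz j (n%:Z - k%:Z - j%:Z) = if (j <= n - k)%N then 'C(j, n - k - j) else 0%N.
Proof.
move=> kn; case: leqP => jt.
  have -> : (n%:Z - k%:Z - j%:Z) = (n - k - j)%N%:Z by lia.
  by [].
have : (n%:Z - k%:Z - j%:Z < 0)%R by lia.
by case: (n%:Z - k%:Z - j%:Z) => // m; lia.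
Qed.

Lemma trsE (R : comNzRingType) (r s : R) n k : (k <= n)%N ->
  trs r s n k = ((PpG r s) ^+ n.+1)`_(n - k).
Proof.
move=> kn; rewrite /PpG addrC exprD1n coef_sum /trs; apply: eq_bigr => j _.
rewrite coefMn exprMn coefXnM coefLpow binzE //.
case: ltnP => tj.
  by rewrite muln0 mul0r mul0r mul0rn.
case: (leqP (n - k - j) j) => hj.
  have -> : (2 * j + k - n = j - (n - k - j))%N by lia.
  by rewrite natrM mulrnAr -mulr_natl mulrA mulrC -!mulrA mulr_natl mulrnAl; ring.
by rewrite (bin_small hj) muln0 mul0r mul0r mul0rn.
Qed.

Lemma trs0 (R : comNzRingType) (r s : R) n k : (n < k)%N -> trs r s n k = 0.
Proof.
move=> nk; rewrite /trs big1 // => j _.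
have : (n%:Z - k%:Z - j%:Z < 0)%R by lia.
by case: (n%:Z - k%:Z - j%:Z) => [m|m] /=; [lia | rewrite muln0 mul0r mul0r].
Qed.
Section S.
Variable R : comNzRingType.
Implicit Types (a b : series R) (p q : {poly R}).
Definition agr K (a : series R) p := forall i, (i < K)%N -> a i = p`_i.
Definition eqK K p q := forall i, (i < K)%N -> p`_i = q`_i.
Lemma agr_mul K a b p q : agr K a p -> agr K b q -> agr K (smul a b) (p * q).
Proof.
move=> ha hb i iK; rewrite coefM /smul; apply: eq_bigr => l _.
rewrite ha ?hb //; last by apply: leq_ltn_trans iK; rewrite -ltnS.
by apply: leq_ltn_trans iK; rewrite leq_subr.
Qed.
Lemma agr_one K : agr K (sone R) 1.
Proof. by move=> i _; rewrite coef1 /sone. Qed.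
Lemma agr_pow K a p k : agr K a p -> agr K (spow a k) (p ^+ k).
Proof.
move=> h; elim: k => [|k IH]; first exact: agr_one.
by rewrite exprS /spow iterS; apply: agr_mul.
Qed.
Lemma agr_deriv K a p : agr K.+1 a p -> agr K (sderiv a) p^`().
Proof. by move=> h i iK; rewrite coef_deriv /sderiv h. Qed.
Lemma agr_le K K' a p : (K' <= K)%N -> agr K a p -> agr K' a p.
Proof. by move=> le h i iK; apply: h; apply: leq_trans le. Qed.

Variables r s : R.
Definition Lp : {poly R} := r%:P + s%:P * 'X.
Definition Qp : {poly R} := 'X * Lp.
Definition Pp : {poly R} := 1 + Qp.
Definition Gp K : {poly R} := \sum_(i < K) (- Qp) ^+ i.

Lemma qrsE i : qrs r s i = Qp`_i.
Proof.
rewrite /qrs /Qp coefXM /Lp coefD coefC coefCM coefX.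
by case: i => [|[|[|i]]] //=; rewrite ?mulr0 ?mulr1 ?addr0 ?add0r.
Qed.

Lemma coef_negQ_pow l i : (i < l)%N -> ((- Qp) ^+ l)`_i = 0.
Proof.
by move=> il; rewrite /Qp -mulrN exprMn coefXnM il.
Qed.

Lemma sinv1_agr K : agr K (sinv1 (qrs r s)) (Gp K).
Proof.
move=> i iK; rewrite /sinv1 /Gp coef_sum.
have h : agr i.+1 (fun m => - qrs r s m) (- Qp) by move=> j _; rewrite coefN qrsE.
transitivity (\sum_(l < i.+1) ((- Qp) ^+ l)`_i).
  by apply: eq_bigr => l _; rewrite (agr_pow _ _ _ l h).
rewrite (big_ord_widen K (fun l => ((- Qp) ^+ l)`_i) iK) big_mkcond /=.
apply: eq_bigr => l _; case: ifP => // /negbT; rewrite -leqNgt => il.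
by rewrite coef_negQ_pow.
Qed.

Lemma PG_exact K : Pp * Gp K = 1 - (- Qp) ^+ K.
Proof.
elim: K => [|K IH]; first by rewrite /Gp big_ord0 mulr0 expr0 subrr.
rewrite /Gp big_ord_recr /= mulrDr -/(Gp K) IH exprS /Pp; ring.
Qed.

Lemma PG K : eqK K (Pp * Gp K) 1.
Proof. by move=> i iK; rewrite PG_exact coefB coef_negQ_pow // subr0. Qed.
Lemma eqK_eq K p q : p = q -> eqK K p q.
Proof. by move=> ->. Qed.
Lemma eqK_trans K p q t : eqK K p q -> eqK K q t -> eqK K p t.
Proof. by move=> h1 h2 i iK; rewrite h1 ?h2. Qed.
Lemma eqK_le K K' p q : (K' <= K)%N -> eqK K p q -> eqK K' p q.
Proof. by move=> le h i iK; apply: h; apply: leq_trans le. Qed.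
Lemma eqK_add K p p' q q' : eqK K p p' -> eqK K q q' -> eqK K (p + q) (p' + q').
Proof. by move=> h1 h2 i iK; rewrite !coefD h1 ?h2. Qed.
Lemma eqK_sub K p p' q q' : eqK K p p' -> eqK K q q' -> eqK K (p - q) (p' - q').
Proof. by move=> h1 h2 i iK; rewrite !coefB h1 ?h2. Qed.
Lemma eqK_mul K p p' q q' : eqK K p p' -> eqK K q q' -> eqK K (p * q) (p' * q').
Proof.
move=> ha hb i iK; rewrite !coefM; apply: eq_bigr => l _.
rewrite ha ?hb //; last by apply: leq_ltn_trans iK; rewrite -ltnS.
by apply: leq_ltn_trans iK; rewrite leq_subr.
Qed.
Lemma eqK_pow K p q k : eqK K p q -> eqK K (p ^+ k) (q ^+ k).
Proof.
move=> h; elim: k => [|k IH]; first by apply: eqK_eq.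
by rewrite !exprS; apply: eqK_mul.
Qed.
Lemma eqK_X K p q : eqK K p q -> eqK K.+1 ('X * p) ('X * q).
Proof. by move=> h [|i] iK; rewrite !coefXM //= h. Qed.
Lemma eqK_Xn K m p q : eqK K p q -> eqK (m + K) ('X^m * p) ('X^m * q).
Proof.
move=> h i iK; rewrite !coefXnM; case: ltnP => // mi.
by apply: h; rewrite ltn_subLR.
Qed.
Lemma eqK_deriv K p q : eqK K.+1 p q -> eqK K p^`() q^`().
Proof. by move=> h i iK; rewrite !coef_deriv h. Qed.

Lemma Pp0 : Pp`_0 = 1.
Proof. by rewrite /Pp coefD coef1 /Qp coefXM addr0. Qed.

Section Main.
Variable n : nat.
Let G := Gp n.+1.
Let F := 'X * G.
Let Fd := F^`().
Lemma E1 : eqK n.+1 (Pp * G) 1. Proof. exact: PG. Qed.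
Lemma claimA : eqK n.+1 (Pp ^+ 2 * Fd) (Pp - 'X * Pp^`()).
Proof.
pose D := (Pp * G)^`().
have ex : Pp ^+ 2 * Fd = Pp * (Pp * G) + 'X * (Pp * D) - 'X * Pp^`() * (Pp * G).
  by rewrite /Fd /F /D !derivM derivX; ring.
rewrite ex; apply: (@eqK_trans _ _ (Pp * 1 + 'X * (Pp * 0) - 'X * Pp^`() * 1)).
  apply: eqK_sub; last by apply: eqK_mul => //; apply: E1.
  apply: eqK_add; first by apply: eqK_mul => //; apply: E1.
  apply: eqK_X; apply: eqK_mul => //; rewrite /D.
  have -> : (0 : {poly R}) = 1^`() by rewrite derivC.
  by apply: eqK_deriv; apply: E1.
by apply: eqK_eq; rewrite mulr0 mulr0 addr0 !mulr1.
Qed.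
Lemma claimB m : eqK n.+1 (F ^+ m * Pp ^+ m) ('X ^+ m).
Proof.
have -> : F ^+ m * Pp ^+ m = 'X ^+ m * (Pp * G) ^+ m by rewrite /F !exprMn; ring.
apply: (@eqK_le (m + n.+1)); first exact: leq_addl.
rewrite -[X in eqK _ _ X]mulr1 -(expr1n _ m); apply: eqK_Xn; apply: eqK_pow; exact: E1.
Qed.

Lemma frs_agr : agr n.+2 (frs r s) F.
Proof.
move=> [|i] iK; first by rewrite /F coefXM.
by rewrite /F coefXM /= (sinv1_agr n.+1).
Qed.

Lemma Mrs_agr m : agr n.+1 (smul (sderiv (frs r s)) (spow (frs r s) m)) (Fd * F ^+ m).
Proof.
apply: agr_mul; first exact: agr_deriv frs_agr.
by apply: agr_pow; apply: agr_le frs_agr.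
Qed.

Lemma main_coef m : ((Fd * F ^+ m) * Pp ^+ n.+1)`_n = (n == m)%:R.
Proof.
case: (ltnP n m) => nm.
  have -> : Fd * F ^+ m * Pp ^+ n.+1 = 'X ^+ m * (Fd * G ^+ m * Pp ^+ n.+1).
    by rewrite /F exprMn; ring.
  by rewrite coefXnM nm ltn_eqF.
move: (subnKC nm); case: (n - m)%N => [|e] hn.
  have -> : Fd * F ^+ m * Pp ^+ n.+1 = (Fd * Pp) * (F ^+ m * Pp ^+ m).
    by rewrite -hn addn0 exprS; ring.
  rewrite (eqK_mul _ _ _ _ _ (eqK_eq _ _ _ (erefl (Fd * Pp))) (claimB m)); last by [].
  rewrite -hn addn0 eqxx coefMXn ltnn subnn coef0M Pp0 mulr1.
  rewrite /Fd coef_deriv /F coefXM /=.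
  have := E1 0 (ltn0Sn n); rewrite coef0M Pp0 mul1r coef1 /= => ->.
  by [].
have -> : Fd * F ^+ m * Pp ^+ n.+1 = (Pp ^+ 2 * Fd) * (F ^+ m * Pp ^+ m) * Pp ^+ e.
  rewrite -hn (_ : (m + e.+1).+1 = 2 + m + e)%N; last by lia.
  by rewrite !exprD; ring.
rewrite (eqK_mul _ _ _ _ _ (eqK_mul _ _ _ _ _ claimA (claimB m)) (eqK_eq _ _ _ (erefl (Pp ^+ e)))); last by [].
have -> : (Pp - 'X * Pp^`()) * 'X ^+ m * Pp ^+ e
   = 'X ^+ m * (Pp ^+ e.+1 - 'X * (Pp^`() * Pp ^+ e)) by rewrite exprS; ring.
rewrite -hn coefXnM ltnNge leq_addr /= addKn coefB coefXM /=.
have kk : (Pp ^+ e.+1)`_e.+1 = (Pp^`() * Pp ^+ e)`_e := key _ r s e.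
rewrite kk subrr.
by case: eqP => //; lia.
Qed.
End Main.
End S.

Lemma TM (R : comNzRingType) (r s : R) (N : nat) :
  (\matrix_(i < N, j < N) trs r s i j) *m (\matrix_(i < N, j < N) Mrs r s i j)
    = 1%:M.
Proof.
apply/matrixP => i j; rewrite !mxE.
under eq_bigr do rewrite !mxE.
rewrite (bigID (fun k : 'I_N => (k < i.+1)%N)) /= [X in _ + X]big1 ?addr0; last first.
  by move=> k; rewrite -leqNgt => ik; rewrite trs0 // mul0r.
rewrite -(big_ord_widen N (fun k => trs r s i k * Mrs r s k j) (ltn_ord i)).
have mc := main_coef R r s i j; rewrite coefM in mc.
rewrite -mc; apply: eq_bigr => k _.
rewrite mulrC trsE; last by rewrite -ltnS.
congr (_ * _); rewrite /Mrs /riordan (Mrs_agr R r s i j k) //.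
Qed.

Theorem mainTheorem13 (R : comNzRingType) (r s : R) (N : nat) :
  (\matrix_(i < N, j < N) Mrs r s i j) *m (\matrix_(i < N, j < N) trs r s i j)
    = 1%:M
  /\
  (\matrix_(i < N, j < N) trs r s i j) *m (\matrix_(i < N, j < N) Mrs r s i j)
    = 1%:M.
Proof.
split; last exact: TM.
by apply: mulmx1C; apply: TM.
Qed.
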